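(* Let $\pi=(\pi_n^{n+1}\colon(X_{n+1},f_{n+1})\to(X_n,f_n))_{n\ge1}$ be an inverse sequence of equivariant maps satisfying MLC(1), and suppose $(X_n,f_n)$ is a transitive subshift of finite type for each $n\ge1$. Then there is $D_\ast=(D_n)_{n\ge1}\in\mathcal{D}_\pi$ such that the inverse sequence $\tilde\pi=(\pi_n^{n+1}|_{D_{n+1}}\colon D_{n+1}\to D_n)_{n\ge1}$ satisfies MLC(1).
   Context: Equivariant means $\pi_n^{n+1}$ continuous with $f_n\circ\pi_n^{n+1}=\pi_n^{n+1}\circ f_{n+1}$; $\pi_n^m=\pi_n^{n+1}\circ\cdots\circ\pi_{m-1}^m$. An inverse sequence $(p_n\colon Z_{n+1}\to Z_n)$ satisfies MLC(1) if $p_n(Z_{n+1})=p_n(p_{n+1}(Z_{n+2}))$ for all $n$. A subshift of finite type is $(Z,\sigma|_Z)$ with $S$ a finite discrete set, $\sigma$ the shift $(x_i)_{i\ge1}\mapsto(x_{i+1})_{i\ge1}$ on $S^{\mathbb N}$, and $Z=\{x:(x_i,\dots,x_{i+N})\in F\ \forall i\}$ for some $N>0$, $F\subset S^{N+1}$; it is transitive if for all nonempty open $U,V\subset Z$ there is $k>0$ with $\sigma^k(U)\cap V\ne\emptyset$. For a chain transitive continuous map $g$ of a compact metric space $(Y,d)$ (every transitive SFT is such): a $\delta$-chain is $(y_i)_{i=0}^k$, $k>0$, with $d(g(y_i),y_{i+1})\le\delta$, a $\delta$-cycle of length $k$ if $y_0=y_k$; $m(g,\delta)$ is the gcd of lengths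 of $\delta$-cycles; $y\sim_{g,\delta}z$ iff there is a $\delta$-chain from $y$ to $z$ of length divisible by $m(g,\delta)$; $y\sim_g z$ iff $y\sim_{g,\delta}z$ for all $\delta>0$; $\mathcal{D}(g)$ is the set of equivalence classes of $\sim_g$. Finally $\mathcal{D}_\pi=\{(D_n)_{n\ge1}\in\prod_n\mathcal{D}(f_n):\pi_n^{n+1}(D_{n+1})\subset D_n\ \forall n\}$. *)

(* Defs.v *)
From mathcomp Require Import all_boot.
Set Implicit Arguments. Unset Strict Implicit. Unset Printing Implicit Defensive.

Definition pset (T : Type) := T -> Prop.
Definition same_set (T : Type) (P Q : pset T) := forall x, P x <-> Q x.
Definition img (A B : Type) (f : A -> B) (P : pset A) : pset B :=
  fun y => exists x, P x /\ f x = y.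

(* The full shift on S^N (indices start at 0 instead of 1). *)
Definition shift (S : Type) (x : nat -> S) : nat -> S := fun i => x i.+1.

(* agree k x y  <->  d(x,y) <= 2^-k  for the standard metric
   d(x,y) = 2^-(min {i | x i <> y i}) (d(x,x)=0) on S^N. *)
Definition agree (S : Type) (k : nat) (x y : nat -> S) :=
  forall i, i < k -> x i = y i.

Definition window (S : Type) (N : nat) (x : nat -> S) (i : nat) : N.+1.-tuple S :=
  [tuple x (i + j) | j < N.+1].

Definition is_SFT (S : finType) (Z : pset (nat -> S)) :=
  exists N, 0 < N /\ exists F : {set N.+1.-tuple S},
    forall x, Z x <-> (forall i, window N x i \in F).

(* U is an open subset of Z (relative product topology = metric topology). *)
Definition rel_open (S : Type) (Z U : pset (nat -> S)) :=
  (forall x, U x -> Z x) /\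
  (forall x, U x -> exists k, forall y, Z y -> agree k x y -> U y).

Definition transitive_shift (S : Type) (Z : pset (nat -> S)) :=
  forall U V, rel_open Z U -> rel_open Z V -> (exists x, U x) -> (exists x, V x) ->
    exists k, 0 < k /\ exists x, U x /\ V (iter k (@shift S) x).

Definition is_transitive_SFT (S : finType) (Z : pset (nat -> S)) :=
  is_SFT Z /\ transitive_shift Z.

Definition cont_on (S S' : Type) (X : pset (nat -> S)) (f : (nat -> S) -> (nat -> S')) :=
  forall x, X x -> forall k, exists l, forall y, X y -> agree l x y -> agree k (f x) (f y).

(* Chains for g = shift|_Y with precision delta = 2^-d (d : nat).
   c 0, ..., c k is a delta-chain of length k. *)
Definition is_chain (S : Type) (Y : pset (nat -> S)) (d k : nat) (c : nat -> nat -> S) :=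
  0 < k /\ (forall i, i <= k -> Y (c i)) /\
  (forall i, i < k -> agree d (shift (c i)) (c i.+1)).

Definition is_cycle (S : Type) (Y : pset (nat -> S)) (d k : nat) (c : nat -> nat -> S) :=
  is_chain Y d k c /\ c 0 = c k.

(* m = m(g, delta): gcd of the lengths of delta-cycles (0 if there are none) *)
Definition is_cycle_gcd (S : Type) (Y : pset (nat -> S)) (d m : nat) :=
  (forall k c, is_cycle Y d k c -> m %| k) /\
  (forall e, (forall k c, is_cycle Y d k c -> e %| k) -> e %| m).

Definition chain_rel_d (S : Type) (Y : pset (nat -> S)) (d : nat) (y z : nat -> S) :=
  exists m, is_cycle_gcd Y d m /\
    exists k c, is_chain Y d k c /\ c 0 = y /\ c k = z /\ m %| k.

Definition chain_rel (S : Type) (Y : pset (nat -> S)) (y z : nat -> S) :=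
  forall d, chain_rel_d Y d y z.

Definition is_D_class (S : Type) (Y : pset (nat -> S)) (D : pset (nat -> S)) :=
  exists y, Y y /\ forall z, D z <-> (Y z /\ chain_rel Y y z).

Definition MLC1 (T : nat -> Type) (Z : forall n, pset (T n))
  (p : forall n, T n.+1 -> T n) :=
  forall n, same_set (img (p n) (Z n.+1)) (img (p n) (img (p n.+1) (Z n.+2))).

(* Main.v *)
Require Import Defs.
From mathcomp Require Import all_boot zify.
From Stdlib Require Import Classical FunctionalExtensionality ClassicalEpsilon.
Set Implicit Arguments. Unset Strict Implicit. Unset Printing Implicit Defensive.

Section Agree.
Variable S : Type.
Implicit Types x y z : nat -> S.

Lemma agree_refl k x : agree k x x. Proof. by []. Qed.
Lemma agree_sym k x y : agree k x y -> agree k y x.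
Proof. by move=> H i Hi; rewrite H. Qed.
Lemma agree_trans k x y z : agree k x y -> agree k y z -> agree k x z.
Proof. by move=> H1 H2 i Hi; rewrite H1 // H2. Qed.
Lemma agree_le k k' x y : k <= k' -> agree k' x y -> agree k x y.
Proof. move=> Hk H i Hi; apply: H; lia. Qed.
Lemma agree_shift k x y : agree k.+1 x y -> agree k (shift x) (shift y).
Proof. move=> H i Hi; apply: H; lia. Qed.

Lemma iter_shiftE k x : iter k (@shift S) x = fun i => x (i + k).
Proof.
elim: k => [|k IH] /=; first by apply: functional_extensionality => i; rewrite addn0.
rewrite IH; apply: functional_extensionality => i; rewrite /shift; congr x; lia.
Qed.

Lemma iter_shift_add a b x : iter a (@shift S) (iter b (@shift S) x) = iter (a + b) (@shift S) x.
Proof. by rewrite iterD. Qed.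

Lemma shift_iter k x : shift (iter k (@shift S) x) = iter k (@shift S) (shift x).
Proof. by rewrite -iterSr -iterS. Qed.

End Agree.

Section SFTbasic.
Variable S : finType.
Variable Y : pset (nat -> S).
Hypothesis HY : is_SFT Y.

Lemma window_eq N (x y : nat -> S) i i' : (forall j, j <= N -> x (i + j) = y (i' + j)) ->
  window N x i = window N y i'.
Proof. move=> H; apply: eq_mktuple => j; apply: H; have := ltn_ord j; lia. Qed.

Lemma Y_closed w : (forall l, exists x, Y x /\ agree l w x) -> Y w.
Proof.
case: HY => N [_ [F HF]] H; apply/HF => i.
case: (H (i + N).+1) => x [Yx Ax].
rewrite (@window_eq N w x i i); first by move/HF: Yx; apply.
move=> j Hj; apply: Ax; lia.
Qed.

Lemma Y_shift x : Y x -> Y (shift x).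
Proof.
case: HY => N [_ [F HF]] /HF H; apply/HF => i.
rewrite (@window_eq N _ x i i.+1) //.
Qed.

Lemma Y_iter k x : Y x -> Y (iter k (@shift S) x).
Proof. elim: k => //= k IH Yx; apply: Y_shift; exact: IH. Qed.

End SFTbasic.

Definition catc (S : Type) (c1 : nat -> nat -> S) k1 (c2 : nat -> nat -> S) :=
  fun i => if i <= k1 then c1 i else c2 (i - k1).

Section Chains.
Variable S : finType.
Variable Y : pset (nat -> S).

Lemma chain_le d d' k c : d <= d' -> is_chain Y d' k c -> is_chain Y d k c.
Proof. move=> Hd [H1 [H2 H3]]; split=> //; split=> // i Hi; apply: agree_le Hd _; exact: H3. Qed.

Lemma cycle_le d d' k c : d <= d' -> is_cycle Y d' k c -> is_cycle Y d k c.
Proof. by move=> Hd [H1 H2]; split=> //; apply: chain_le H1. Qed.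

Lemma chain_cat d k1 c1 k2 c2 : is_chain Y d k1 c1 -> is_chain Y d k2 c2 -> c1 k1 = c2 0 ->
  is_chain Y d (k1 + k2) (catc c1 k1 c2).
Proof.
move=> [P1 [Y1 A1]] [P2 [Y2 A2]] E; split; first lia.
split=> [i Hi|i Hi]; rewrite /catc.
  case: ifP => Hik; first by apply: Y1.
  apply: Y2; lia.
case: (leqP i.+1 k1) => Hik.
  have Hik' : i <= k1 by lia.
  rewrite Hik'; apply: A1; lia.
case: (leqP i k1) => Hik'.
  have Ei : i = k1 by lia.
  rewrite Ei E (_ : k1.+1 - k1 = 1); last lia.
  apply: A2; lia.
have -> : i.+1 - k1 = (i - k1).+1 by lia.
apply: A2; lia.
Qed.

Lemma catc0 k1 c1 c2 : catc c1 k1 c2 0 = c1 0 :> (nat -> S).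
Proof. by []. Qed.
Lemma catc_end k1 c1 k2 c2 : 0 < k2 -> catc c1 k1 c2 (k1 + k2) = c2 k2 :> (nat -> S).
Proof. move=> Hk; rewrite /catc ifF; last lia. congr c2; lia. Qed.
Lemma catc_mid k1 c1 c2 : catc c1 k1 c2 k1 = c1 k1 :> (nat -> S).
Proof. by rewrite /catc leqnn. Qed.

Lemma chain_diag d L c : is_chain Y d L c ->
  forall j i s, i + j <= L -> j + s <= d -> c (i + j) s = c i (j + s).
Proof.
move=> [_ [_ A]]; elim=> [|j IH] i s H1 H2; first by rewrite addn0.
have -> : i + j.+1 = i.+1 + j by lia.
rewrite IH; try lia.
have := A i _ (j + s) _; rewrite /shift => <-; try lia.
congr (c i); lia.
Qed.

Hypothesis HY : is_SFT Y.

Lemma shadow : exists N, forall d L c, N <= d -> is_chain Y d L c ->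
  exists x, Y x /\ (forall i, i <= L -> agree d.+1 (iter i (@shift S) x) (c i)) /\
    iter L (@shift S) x = c L.
Proof.
case: HY => N [HN [F HF]]; exists N => d L c HNd Hc.
pose x := fun i => if i < L then c i 0 else c L (i - L).
have xc : forall i j, i <= L -> j <= d -> x (i + j) = c i j.
  move=> i j Hi Hj; rewrite /x; case: ifP => H.
    rewrite (chain_diag Hc (j := j) (i := i) (s := 0)) ?addn0 //; lia.
  have := chain_diag Hc (j := L - i) (i := i) (s := i + j - L).
  have -> : i + (L - i) = L by lia.
  move=> ->; try lia. congr (c i); lia.
have [_ [Yc _]] := Hc.
exists x; split; last split.
- apply/HF => t; case: (ltnP t L) => Ht.
  + rewrite (@window_eq _ N x (c t) t 0); first by move/HF: (Yc t (ltnW Ht)); apply.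
    move=> j Hj; rewrite xc //; lia.
  + rewrite (@window_eq _ N x (c L) t (t - L)); first by move/HF: (Yc L (leqnn L)); apply.
    move=> j Hj; rewrite /x ifF; last lia. congr (c L); lia.
- move=> i Hi j Hj; rewrite iter_shiftE addnC xc //; lia.
- rewrite iter_shiftE; apply: functional_extensionality => j.
  rewrite /x ifF; last lia. congr (c L); lia.
Qed.

End Chains.

Section Trans.
Variable S : finType.
Variable Y : pset (nat -> S).
Hypothesis HY : is_transitive_SFT Y.

Lemma chain_ex d y z : Y y -> Y z ->
  exists k c, is_chain Y d k c /\ c 0 = y /\ c k = z.
Proof.
move=> Yy Yz; case: HY => HS Htr.
pose U := fun x => Y x /\ agree d.+1 y x.
pose V := fun x => Y x /\ agree d z x.
have oU : rel_open Y U.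
  split=> [x []//|x [Yx Ax]]; exists d.+1 => y' Yy' A'.
  split=> //; exact: agree_trans Ax A'.
have oV : rel_open Y V.
  split=> [x []//|x [Yx Ax]]; exists d => y' Yy' A'.
  split=> //; exact: agree_trans Ax A'.
have eU : exists x, U x by exists y; split.
have eV : exists x, V x by exists z; split.
have [k [Hk [x [[Yx Ax] [Yk Ak]]]]] := Htr U V oU oV eU eV.
pose c := fun i => if i == 0 then y else if i == k then z else iter i (@shift S) x.
exists k, c; split; last first.
  split=> //; rewrite /c ifF //; last lia. by rewrite eqxx.
split=> //; split.
  move=> i Hi; rewrite /c; case: ifP => // _; case: ifP => // _; exact: Y_iter.
move=> i Hi; rewrite /c.
case: (i =P 0) => [->|Hi0] /=.
  case: (1 =P k) => [Ek|Ek].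
    apply: agree_trans (agree_shift Ax) _; rewrite -Ek in Ak; exact: agree_sym.
  exact: agree_shift.
case: (i.+1 =P k) => [Ek|Ek]; last by rewrite ifF; [ | apply/eqP; lia].
rewrite ifF; last by apply/eqP; lia.
rewrite -Ek in Ak; rewrite shift_iter -iterSr; exact: agree_sym.
Qed.

Lemma periodic_ex : (exists x, Y x) -> exists P u, 0 < P /\ Y u /\ iter P (@shift S) u = u.
Proof.
case=> x Yx; case: HY => [[N [HN [F HF]]] _].
pose g := fun k : 'I_(#|{: N.+1.-tuple S}|.+1) => window N x k.
have [i0 [j0 Hij Eij]] : exists i0, exists2 j0, i0 != j0 & g i0 = g j0.
  apply/injectivePn; apply/negP => /injectiveP Hinj.
  by have := leq_card _ Hinj; rewrite card_ord ltnn.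
wlog Hlt : i0 j0 Hij Eij / (i0 < j0)%N.
  move=> W; case: (ltngtP i0 j0) => H; first exact: W Hij Eij H.
    by apply: (W j0 i0); rewrite // eq_sym.
  by move: Hij; rewrite (val_inj H) eqxx.
set i := nat_of_ord i0 in Hlt Eij; set j := nat_of_ord j0 in Hlt Eij.
have Exij : forall a, a <= N -> x (i + a) = x (j + a).
  move=> a Ha; have := congr1 (fun t => tnth t (inord a)) Eij.
  by rewrite /g /window !tnth_mktuple inordK.
pose P := j - i.
have HP : 0 < P by rewrite /P; lia.
pose u := fun t => x (i + t %% P).
have H : forall b, b < P + N.+1 -> x (i + b %% P) = x (i + b).
  elim/ltn_ind => b IH Hb; case: (ltnP b P) => HbP; first by rewrite modn_small.
  have -> : b = (b - P) + P by lia.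
  rewrite modnDr IH; try lia.
  rewrite Exij; last lia. congr x; rewrite /P; lia.
exists P, u; split=> //; split.
  apply/HF => t; rewrite (@window_eq _ N u x t (i + t %% P)).
    by move/HF: Yx; apply.
  move=> r Hr; rewrite /u -addnA -(H (t %% P + r)); last by have := ltn_pmod t HP; lia.
  by rewrite modnDml.
rewrite iter_shiftE; apply: functional_extensionality => t.
by rewrite /u modnDr.
Qed.

End Trans.

Lemma max_ex (G : nat -> Prop) n : (exists e, e <= n /\ G e) ->
  exists m, G m /\ forall e, G e -> e <= n -> e <= m.
Proof.
elim: n => [|n IH] [e [He Ge]].
  exists e; split=> // e' _ ?; lia.
case: (classic (G n.+1)) => Gn.
  by exists n.+1; split.
have He' : e <= n by case: (e =P n.+1) He => [E|]; [rewrite E in Ge|lia].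
have [m [Gm Hm]] := IH (ex_intro _ e (conj He' Ge)).
exists m; split=> // e' Ge' He''; apply: Hm => //.
by case: (e' =P n.+1) He'' => [E|]; [rewrite E in Ge'|lia].
Qed.

Lemma min_ex (Q : nat -> Prop) : (exists r, Q r) -> exists r, Q r /\ forall r', Q r' -> r <= r'.
Proof.
case=> r; elim/ltn_ind: r => r IH Qr.
case: (classic (exists r', Q r' /\ r' < r)) => [[r' [Qr' Hr']]|H].
  exact: IH Qr'.
exists r; split=> // r' Qr'; case: (leqP r r') => // Hlt.
by exfalso; apply: H; exists r'.
Qed.

Lemma fin_mono M (Q : nat -> nat -> Prop) :
  (forall j d d', d <= d' -> Q j d' -> Q j d) ->
  (forall d, exists j, j < M /\ Q j d) -> exists j, j < M /\ forall d, Q j d.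
Proof.
move=> Hm; elim: M => [|M IH] H.
  by have [j [Hj _]] := H 0.
case: (classic (forall d, Q M d)) => HM; first by exists M.
have [d0 Hd0] := not_all_ex_not _ _ HM.
have [j [Hj Qj]] : exists j, j < M /\ forall d, Q j d.
  apply: IH => d; have [j [Hj Qj]] := H (maxn d d0).
  case: (j =P M) => Ej.
    by exfalso; apply: Hd0; rewrite -Ej; apply: Hm Qj; apply: leq_maxr.
  exists j; split; first lia. by apply: Hm Qj; apply: leq_maxl.
exists j; split=> //; lia.
Qed.

Section Rel.
Variable S : finType.
Variable Y : pset (nat -> S).
Hypothesis HY : is_transitive_SFT Y.
Hypothesis Hne : exists x, Y x.

Let HS : is_SFT Y. Proof. by case: HY. Qed.

Lemma cycle_ex d y : Y y -> exists k c, is_cycle Y d k c /\ c 0 = y.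
Proof.
move=> Yy; have [k [c [Hc [E0 Ek]]]] := chain_ex HY d Yy Yy.
by exists k, c; split=> //; split=> //; rewrite E0 Ek.
Qed.

Lemma orbit_chain d y k : 0 < k -> Y y -> is_chain Y d k (fun i => iter i (@shift S) y).
Proof.
move=> Hk Yy; split=> //; split=> [i _|i _]; first exact: (Y_iter HS).
by rewrite shift_iter -iterSr.
Qed.

Lemma gcd_ex d : exists m, is_cycle_gcd Y d m.
Proof.
have [y Yy] := Hne; have [k0 [c0 [Hc0 _]]] := cycle_ex d Yy.
have Hk0 : 0 < k0 by case: Hc0 => [[]].
pose G e := forall k c, is_cycle Y d k c -> e %| k.
have [m [Gm Hm]] := @max_ex G k0 (ex_intro _ 1 (conj Hk0 (fun _ _ _ => dvd1n _))).
exists m; split=> // e Ge.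
have Gl : G (lcmn e m) by move=> k c Hc; rewrite dvdn_lcm (Ge _ _ Hc) (Gm _ _ Hc).
have Hl : lcmn e m <= k0 by apply: dvdn_leq => //; exact: Gl Hc0.
have Hlm := Hm _ Gl Hl.
have Hm0 : 0 < m by have := Gm _ _ Hc0; case: m {Hm Gm Hlm Hl Gl} => //; rewrite dvd0n; lia.
have He0 : 0 < e by have := Ge _ _ Hc0; case: (e) => //; rewrite dvd0n; lia.
have : m %| lcmn e m by apply: dvdn_lcmr.
move=> /dvdn_leq; rewrite lcmn_gt0 Hm0 He0 => /(_ isT) H.
have E : lcmn e m = m by apply/eqP; rewrite eqn_leq H Hlm.
by rewrite -E dvdn_lcml.
Qed.

Lemma gcd_unique d m m' : is_cycle_gcd Y d m -> is_cycle_gcd Y d m' -> m = m'.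
Proof.
move=> [H1 H2] [H1' H2']; apply/eqP; rewrite eqn_dvd.
by rewrite (H2' _ H1) (H2 _ H1').
Qed.

Lemma gcd_mono d d' m m' : d <= d' -> is_cycle_gcd Y d m -> is_cycle_gcd Y d' m' -> m %| m'.
Proof.
move=> Hd [H1 _] [_ H2']; apply: H2' => k c Hc; apply: H1; exact: cycle_le Hc.
Qed.

Lemma crd_elim d y z m : is_cycle_gcd Y d m -> chain_rel_d Y d y z ->
  exists k c, is_chain Y d k c /\ c 0 = y /\ c k = z /\ m %| k.
Proof. by move=> Hm [m' [Hm' H]]; rewrite (gcd_unique Hm Hm'). Qed.

Lemma crd_Y d y z : chain_rel_d Y d y z -> Y y /\ Y z.
Proof.
move=> [m [_ [k [c [[_ [Yc _]] [<- [<- _]]]]]]]; split; apply: Yc => //.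
Qed.

Lemma crd_mono d d' y z : d <= d' -> chain_rel_d Y d' y z -> chain_rel_d Y d y z.
Proof.
move=> Hd Hr; have [m Hm] := gcd_ex d; have [m' Hm'] := gcd_ex d'.
have [k [c [Hc [E0 [Ek Hk]]]]] := crd_elim Hm' Hr.
exists m; split=> //; exists k, c; split; first exact: chain_le Hc.
by do 2!split=> //; apply: dvdn_trans (gcd_mono Hd Hm Hm') Hk.
Qed.

Lemma crd_refl d y : Y y -> chain_rel_d Y d y y.
Proof.
move=> Yy; have [m Hm] := gcd_ex d; have [k [c [Hcyc E]]] := cycle_ex d Yy.
exists m; split=> //; exists k, c; case: (Hcyc) => Hch Hck.
split=> //; split=> //; split; first by rewrite -Hck.
by case: Hm => H _; apply: H Hcyc.
Qed.

Lemma crd_trans d x y z : chain_rel_d Y d x y -> chain_rel_d Y d y z -> chain_rel_d Y d x z.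
Proof.
move=> H1 H2; have [m Hm] := gcd_ex d.
have [k1 [c1 [Hc1 [E10 [E1k Hk1]]]]] := crd_elim Hm H1.
have [k2 [c2 [Hc2 [E20 [E2k Hk2]]]]] := crd_elim Hm H2.
exists m; split=> //; exists (k1 + k2), (catc c1 k1 c2); split.
  by apply: chain_cat => //; rewrite E1k E20.
split=> //; split; last by rewrite dvdn_add.
by rewrite catc_end //; case: Hc2.
Qed.

Lemma crd_sym d y z : chain_rel_d Y d y z -> chain_rel_d Y d z y.
Proof.
move=> H; have [Yy Yz] := crd_Y H; have [m Hm] := gcd_ex d.
have [k [c [Hc [E0 [Ek Hk]]]]] := crd_elim Hm H.
have [j [c' [Hc' [E0' Ek']]]] := chain_ex HY d Yz Yy.
exists m; split=> //; exists j, c'; do 3!split=> //.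
have Hcy : is_cycle Y d (k + j) (catc c k c').
  split; first by apply: chain_cat => //; rewrite Ek E0'.
  by rewrite catc0 catc_end ?E0 ?Ek' //; case: Hc'.
case: Hm => Hm _; have := Hm _ _ Hcy.
by rewrite dvdn_addr.
Qed.

Definition step_chain (y : nat -> S) := fun i : nat => if i == 0 then y else shift y.

Lemma step_chainP d y : Y y -> is_chain Y d 1 (step_chain y).
Proof.
move=> Yy; split=> //; split=> [i Hi|i Hi]; rewrite /step_chain.
  by case: ifP => // _; apply: (Y_shift HS).
by have -> : i = 0 by lia.
Qed.

Lemma cr_Y y z : chain_rel Y y z -> Y y /\ Y z.
Proof. by move=> H; apply: (crd_Y (H 0)). Qed.
Lemma cr_refl y : Y y -> chain_rel Y y y.
Proof. by move=> Yy d; apply: crd_refl. Qed.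
Lemma cr_sym y z : chain_rel Y y z -> chain_rel Y z y.
Proof. by move=> H d; apply: crd_sym. Qed.
Lemma cr_trans x y z : chain_rel Y x y -> chain_rel Y y z -> chain_rel Y x z.
Proof. by move=> H1 H2 d; apply: crd_trans (H1 d) (H2 d). Qed.

Lemma cr_closed y w : Y w -> (forall d, exists w', chain_rel_d Y d y w' /\ agree d w' w) ->
  chain_rel Y y w.
Proof.
move=> Yw H d; have [w' [Hr Aw]] := H d; have [m Hm] := gcd_ex d.
have [k [c [[Hk [Yc Ac]] [E0 [Ek Hmk]]]]] := crd_elim Hm Hr.
exists m; split=> //; exists k, (fun i => if i == k then w else c i); split; last first.
  by rewrite eqxx ifF ?E0 //; apply/eqP; lia.
split=> //; split=> [i Hi|i Hi]; first by case: ifP => // _; apply: Yc.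
rewrite ifF; last by apply/eqP; lia.
case: ifP => [/eqP Ei|_]; last by apply: Ac.
apply: agree_trans (Ac _ Hi) _; rewrite Ei Ek //.
Qed.

Lemma cr_shift y z : chain_rel Y y z -> chain_rel Y (shift y) (shift z).
Proof.
move=> H d; have [m Hm] := gcd_ex d; have [m' Hm'] := gcd_ex d.+1.
have [k [c [[Hk [Yc Ac]] [E0 [Ek Hmk]]]]] := crd_elim Hm' (H d.+1).
exists m; split=> //; exists k, (fun i => shift (c i)); split; last first.
  by rewrite E0 Ek; split=> //; split=> //; apply: dvdn_trans (gcd_mono _ Hm Hm') Hmk.
split=> //; split=> [i Hi|i Hi]; first by apply: (Y_shift HS); apply: Yc.
by apply: agree_shift; apply: Ac.
Qed.

Lemma cr_iter t y z : chain_rel Y y z ->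
  chain_rel Y (iter t (@shift S) y) (iter t (@shift S) z).
Proof. by elim: t => //= t IH H; apply: cr_shift; apply: IH. Qed.

Lemma cr_unshift y z : Y y -> Y z -> chain_rel Y (shift y) (shift z) -> chain_rel Y y z.
Proof.
move=> Yy Yz H d; have [m Hm] := gcd_ex d.
have [a [ca [Hca [Ea0 [Eak Ha]]]]] := crd_elim Hm (H d).
have [b [cb [Hcb [Eb0 Ebk]]]] := chain_ex HY d (Y_shift HS Yz) Yy.
have [L [cL [HcL [EL0 ELk]]]] := chain_ex HY d Yy Yz.
exists m; split=> //; exists L, cL; do 3!split=> //.
have Hb0 : 0 < b by case: Hcb.
have HL0 : 0 < L by case: HcL.
have Ha0 : 0 < a by case: Hca.
case: Hm => Hm _.
(* cycle y -1-> shift y -a-> shift z -b-> y *)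
have C1 : is_cycle Y d (1 + a + b) (catc (catc (step_chain y) 1 ca) (1 + a) cb).
  split.
    apply: chain_cat; [apply: chain_cat; [exact: step_chainP | by [] | by rewrite Ea0] | by [] |].
    by rewrite catc_end // Eak Eb0.
  by rewrite catc0 catc0 catc_end // Ebk.
(* cycle z -1-> shift z -b-> y -L-> z *)
have C2 : is_cycle Y d (1 + b + L) (catc (catc (step_chain z) 1 cb) (1 + b) cL).
  split.
    apply: chain_cat; [apply: chain_cat; [exact: step_chainP | by [] | by rewrite Eb0] | by [] |].
    by rewrite catc_end // Ebk EL0.
  by rewrite catc0 catc0 catc_end // ELk.
have D1 := Hm _ _ C1; have D2 := Hm _ _ C2.
have E1 : 1 + a + b = a + (1 + b) by lia.
rewrite E1 dvdn_addr // in D1.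
by rewrite dvdn_addr in D2.
Qed.

Lemma per_ex : exists P, 0 < P /\ forall d m, is_cycle_gcd Y d m -> m %| P.
Proof.
have [P [u [HP [Yu Eu]]]] := periodic_ex HY Hne.
exists P; split=> // d m [Hm _]; apply: (Hm _ (fun i => iter i (@shift S) u)).
by split; [exact: orbit_chain | rewrite Eu].
Qed.

Lemma cr_perM M : (forall d m, is_cycle_gcd Y d m -> m %| M) ->
  forall y, Y y -> chain_rel Y y (iter M (@shift S) y).
Proof.
move=> HM y Yy; case: (posnP M) => [->|HM0]; first exact: cr_refl.
move=> d; have [m Hm] := gcd_ex d.
exists m; split=> //; exists M, (fun i => iter i (@shift S) y); split.
  exact: orbit_chain.
by do 2!split=> //; apply: HM Hm.
Qed.

Lemma surj z : Y z -> exists x, Y x /\ shift x = z.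
Proof.
move=> Yz; have [N HN] := shadow HS.
have [L [c [Hc [E0 EL]]]] := chain_ex HY N Yz Yz.
have [x [Yx [_ Ex]]] := HN N L c (leqnn N) Hc.
have HL : 0 < L by case: Hc.
exists (iter L.-1 (@shift S) x); split; first exact: Y_iter.
by rewrite -iterS prednK // Ex EL.
Qed.

Lemma surj_iter t z : Y z -> exists x, Y x /\ iter t (@shift S) x = z.
Proof.
elim: t z => [|t IH] z Yz; first by exists z.
have [x [Yx <-]] := surj Yz; have [x' [Yx' <-]] := IH x Yx.
by exists x'; split=> //; rewrite iterSr.
Qed.

Lemma cr_unshift_iter t y z : Y y -> Y z ->
  chain_rel Y (iter t (@shift S) y) (iter t (@shift S) z) -> chain_rel Y y z.
Proof.
elim: t y z => [|t IH] y z Yy Yz //= H.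
apply: IH => //; apply: cr_unshift => //; exact: Y_iter.
Qed.

Lemma class_onto t y0 z : Y y0 -> chain_rel Y (iter t (@shift S) y0) z ->
  exists u, chain_rel Y y0 u /\ iter t (@shift S) u = z.
Proof.
move=> Yy0 H; have [_ Yz] := cr_Y H.
have [u [Yu Eu]] := surj_iter t Yz; exists u; split=> //.
apply: cr_sym; apply: (@cr_unshift_iter t u y0 Yu Yy0).
by rewrite Eu; apply: cr_sym.
Qed.

Lemma fin_classes M w0 w : Y w0 -> Y w -> 0 < M ->
  (forall d m, is_cycle_gcd Y d m -> m %| M) ->
  exists j, j < M /\ chain_rel Y (iter j (@shift S) w0) w.
Proof.
move=> Yw0 Yw HM0 HM.
apply: (fin_mono (Q := fun j d => chain_rel_d Y d (iter j (@shift S) w0) w)).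
  move=> j d d' Hd; exact: crd_mono.
move=> d; have [m Hm] := gcd_ex d.
have [L [c [Hc [E0 EL]]]] := chain_ex HY d Yw0 Yw.
have HL : 0 < L by case: Hc.
have YL : Y (iter L (@shift S) w0) by exact: Y_iter.
have [b [cb [Hcb [Eb0 EbL]]]] := chain_ex HY d YL Yw0.
have Hb : 0 < b by case: Hcb.
have H1 : chain_rel_d Y d (iter L (@shift S) w0) w.
  exists m; split=> //; exists (b + L), (catc cb b c); split.
    by apply: chain_cat => //; rewrite EbL E0.
  split=> //; split; first by rewrite catc_end.
  have Hcy : is_cycle Y d (L + b) (catc (fun i => iter i (@shift S) w0) L cb).
    split; first by apply: chain_cat; [exact: orbit_chain | exact: Hcb | by rewrite Eb0].
    by rewrite catc0 catc_end // EbL.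
  by case: Hm => Hm _; rewrite addnC; apply: Hm Hcy.
exists (L %% M); split; first exact: ltn_pmod.
apply: crd_trans H1.
have E : iter L (@shift S) w0 = iter (L %% M) (@shift S) (iter (L %/ M * M) (@shift S) w0).
  by rewrite -iterD addnC -divn_eq.
rewrite E; apply: cr_iter; apply: cr_perM => //.
move=> d' m' Hm'; apply: dvdn_mull; exact: HM Hm'.
Qed.

Lemma cycle_cat d k1 c1 k2 c2 : is_cycle Y d k1 c1 -> is_cycle Y d k2 c2 -> c1 0 = c2 0 ->
  is_cycle Y d (k1 + k2) (catc c1 k1 c2) /\ catc c1 k1 c2 0 = c1 0.
Proof.
move=> [H1 E1] [H2 E2] E; split=> //; split.
  by apply: chain_cat => //; rewrite -E1 E.
by rewrite catc0 catc_end ?E -?E2 //; case: H2.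
Qed.

Lemma chain_mult d y z M : chain_rel_d Y d y z -> 0 < M ->
  (forall m, is_cycle_gcd Y d m -> m %| M) ->
  exists k c, is_chain Y d k c /\ c 0 = y /\ c k = z /\ M %| k.
Proof.
move=> Hr HM0 HM; have [m Hm] := gcd_ex d.
have [L0 [c0 [Hc0 [E00 [E0L Hm0]]]]] := crd_elim Hm Hr.
have [_ Yz] := crd_Y Hr.
pose Sz k := k = 0 \/ exists c, is_cycle Y d k c /\ c 0 = z.
have SzD : forall a b, Sz a -> Sz b -> Sz (a + b).
  move=> a b [->|[ca [Ha Ea]]] [->|[cb [Hb Eb]]]; rewrite ?addn0 ?add0n; try by left.
  - by right; exists cb.
  - by right; exists ca.
  right; have [H1 H2] := cycle_cat Ha Hb (etrans Ea (esym Eb)).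
  by exists (catc ca a cb); rewrite H2.
have SzM : forall n a, Sz a -> Sz (n * a).
  move=> n a Ha; elim: n => [|n IH]; first by left.
  by rewrite mulSn; apply: SzD.
pose Q r := 0 < r /\ exists k, Sz k /\ k = r %[mod M].
have QM : Q M by split=> //; exists 0; split; [left | rewrite modnn mod0n].
have [h [[Hh0 [kh [Skh Ekh]]] Hmin]] := min_ex (ex_intro _ M QM).
have L : forall a q, Sz a -> exists b, Sz b /\ b + q * h = a %[mod M].
  move=> a q Sa; exists (a + (M.-1 * q) * kh); split.
    by apply: SzD => //; apply: SzM.
  rewrite -modnDmr -modnMmr -Ekh modnMmr modnDmr.
  have -> : a + M.-1 * q * kh + q * kh = (q * kh) * M + a.
    have -> : M = M.-1.+1 by rewrite prednK.
    rewrite /=; nia.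
  by rewrite modnMDl.
have Hres : forall a, Sz a -> forall r, r < h -> a = r %[mod M] -> r = 0.
  move=> a Sa r Hrh Ea; case: (posnP r) => // Hr0.
  by have := Hmin r (conj Hr0 (ex_intro _ a (conj Sa Ea))); lia.
have HhM : h %| M.
  have [b [Sb Eb]] := L 0 (M %/ h) (or_introl erefl).
  rewrite dvdn_eq; apply/eqP.
  have Er : M %% h = 0.
    apply: (Hres b Sb); first exact: ltn_pmod.
    apply/eqP; rewrite -(eqn_modDr ((M %/ h) * h)); apply/eqP.
    by rewrite Eb addnC -divn_eq mod0n modnn.
  by rewrite {2}(divn_eq M h) Er addn0.
have Hdiv : forall a, Sz a -> h %| a.
  move=> a Sa.
  have [b [Sb Eb]] := L a ((a %% M) %/ h) Sa.
  have Er : (a %% M) %% h = 0.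
    apply: (Hres b Sb); first exact: ltn_pmod.
    apply/eqP; rewrite -(eqn_modDr (((a %% M) %/ h) * h)); apply/eqP.
    by rewrite Eb addnC -divn_eq modn_mod.
  rewrite (divn_eq a M) dvdn_add //; first exact: dvdn_mull.
  by apply/dvdnP; exists ((a %% M) %/ h); rewrite {1}(divn_eq (a %% M) h) Er addn0.
have Hall : forall k c, is_cycle Y d k c -> h %| k.
  move=> k c Hc; have Yw : Y (c 0) by case: Hc => [[_ [Yc _]] _]; apply: Yc.
  have [a [ca [Hca [Ea0 EaL]]]] := chain_ex HY d Yz Yw.
  have [b [cb [Hcb [Eb0 EbL]]]] := chain_ex HY d Yw Yz.
  have Ca : is_cycle Y d (a + b) (catc ca a cb).
    split; first by apply: chain_cat => //; rewrite EaL Eb0.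
    by rewrite catc0 catc_end ?Ea0 ?EbL //; case: Hcb.
  have Cb : is_cycle Y d (a + k + b) (catc (catc ca a c) (a + k) cb).
    have Hk : 0 < k by case: Hc => [[]].
    split.
      apply: chain_cat; [apply: chain_cat; [exact: Hca | by case: Hc | exact: EaL] | exact: Hcb |].
      by rewrite catc_end // Eb0; case: Hc => _ <-.
    by rewrite !catc0 catc_end ?Ea0 ?EbL //; case: Hcb.
  have D1 := Hdiv _ (or_intror (ex_intro _ _ (conj Ca (etrans (catc0 _ _ _) Ea0)))).
  have D2 := Hdiv _ (or_intror (ex_intro _ _ (conj Cb (etrans (catc0 _ _ _)
                                             (etrans (catc0 _ _ _) Ea0))))).
  have E : a + k + b = k + (a + b) by lia.
  by rewrite E dvdn_addl in D2.
have Hhm : h %| m by case: Hm => _; apply.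
have HhL0 : h %| L0 by apply: dvdn_trans Hhm Hm0.
have [b [Sb Eb]] := L 0 (L0 %/ h) (or_introl erefl).
rewrite divnK // mod0n in Eb.
case: Sb => [Eb0|[cb [Hcb Ecb]]].
  exists L0, c0; do 3!split=> //; apply/dvdnP.
  by rewrite Eb0 add0n in Eb; exists (L0 %/ M); rewrite {1}(divn_eq L0 M) Eb addn0.
exists (L0 + b), (catc c0 L0 cb); split.
  by apply: chain_cat => //; [case: Hcb | rewrite E0L Ecb].
split=> //; split.
  by case: Hcb => [[Hb _] Eb']; rewrite catc_end // -Eb' Ecb.
by apply/dvdnP; exists ((b + L0) %/ M); rewrite addnC {1}(divn_eq (b + L0) M) Eb addn0.
Qed.

End Rel.

Definition infi (P : nat -> Prop) := forall e0, exists e, e0 <= e /\ P e.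

Lemma bound_list (S : eqType) (R : S -> nat -> Prop) (l : seq S) :
  (forall s, exists b, forall e, b <= e -> R s e) ->
  exists B, forall s, s \in l -> forall e, B <= e -> R s e.
Proof.
move=> H; elim: l => [|s l [B HB]]; first by exists 0.
have [b Hb] := H s; exists (maxn b B) => s' /predU1P [->|Hs'] e He.
  by apply: Hb; apply: leq_trans He; apply: leq_maxl.
by apply: HB => //; apply: leq_trans He; apply: leq_maxr.
Qed.

Lemma pigeon (S : finType) (P : nat -> Prop) (f : nat -> S) :
  infi P -> exists s, infi (fun e => P e /\ f e = s).
Proof.
move=> HP; apply: NNPP => Hn.
have H : forall s, exists b, forall e, b <= e -> ~ (P e /\ f e = s).
  move=> s; apply: NNPP => Hs; apply: Hn; exists s => e0.
  apply: NNPP => He; apply: Hs; exists e0 => e He0 Pe.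
  by apply: He; exists e.
have [B HB] := bound_list (enum S) H.
have [e [He Pe]] := HP B.
by apply: (HB (f e) _ e He); rewrite ?mem_enum.
Qed.

Section Cluster.
Variable S : finType.
Variable w : nat -> nat -> S.

Let pick_spec (u : nat -> S) (l : nat) : exists s : S,
  infi (fun e => agree l u (w e)) -> infi (fun e => (agree l u (w e)) /\ w e l = s).
Proof.
case: (classic (infi (fun e => agree l u (w e)))) => H.
  have [s Hs] := pigeon (fun e => w e l) H; by exists s.
by exists (w 0 0).
Qed.

Let pick u l := proj1_sig (constructive_indefinite_description _ (pick_spec u l)).
Let pickP u l := proj2_sig (constructive_indefinite_description _ (pick_spec u l)).

Fixpoint pref (l : nat) : nat -> S :=
  match l with
  | 0 => w 0
  | l'.+1 => fun i => if i < l' then pref l' i else pick (pref l') l'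
  end.

Lemma pref_inv l : infi (fun e => agree l (pref l) (w e)).
Proof.
elim: l => [|l IH]; first by move=> e0; exists e0.
move=> e0; have [e [He [Ae Ee]]] := pickP IH e0.
exists e; split=> // i Hi /=; case: ifP => Hil; first exact: Ae.
have -> : i = l by lia.
by rewrite Ee.
Qed.

Lemma pref_stable l l' i : i < l -> l <= l' -> pref l' i = pref l i.
Proof.
move=> Hi; elim: l' => [|l' IH] Hl; first lia.
case: (ltngtP l l'.+1) => H; [ | lia | by rewrite H].
by rewrite /= ifT ?IH //; lia.
Qed.

Lemma cluster : exists v, forall l, infi (fun e => agree l v (w e)).
Proof.
exists (fun i => pref i.+1 i) => l e0.
have [e [He Ae]] := pref_inv l e0.
exists e; split=> // i Hi; rewrite -Ae // (pref_stable (l := i.+1) (l' := l)) //.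
Qed.

End Cluster.

Section Compact.
Variables S T : finType.
Variable Y : pset (nat -> S).
Hypothesis HS : is_SFT Y.
Variable f : (nat -> S) -> (nat -> T).
Hypothesis Hf : cont_on Y f.

Lemma unif k : exists l, forall x y, Y x -> Y y -> agree l x y -> agree k (f x) (f y).
Proof.
apply: NNPP => Hn.
have H : forall l, exists xy : (nat -> S) * (nat -> S),
    Y xy.1 /\ Y xy.2 /\ agree l xy.1 xy.2 /\ ~ agree k (f xy.1) (f xy.2).
  move=> l; apply: NNPP => Hl; apply: Hn; exists l => x y Yx Yy Axy.
  apply: NNPP => Hk; apply: Hl; by exists (x, y).
pose xy l := proj1_sig (constructive_indefinite_description _ (H l)).
have xyP l := proj2_sig (constructive_indefinite_description _ (H l)).
have [v Hv] := cluster (fun l => (xy l).1).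
have Yv : Y v.
  apply: (Y_closed HS) => l; have [e [_ Ae]] := Hv l 0.
  by exists (xy e).1; split=> //; case: (xyP e).
have [l0 Hl0] := Hf Yv k.
have [e [He Ae]] := Hv l0 l0.
case: (xyP e) => [Y1 [Y2 [A12 NA]]]; apply: NA.
apply: agree_trans (Hl0 _ Y2 _).
  by apply: agree_sym; apply: Hl0.
by apply: agree_trans Ae (agree_le He A12).
Qed.

Lemma closed_img (D : pset (nat -> S)) u :
  (forall w, D w -> Y w) ->
  (forall w, Y w -> (forall l, exists w', D w' /\ agree l w' w) -> D w) ->
  (forall e, exists w, D w /\ agree e (f w) u) -> exists w, D w /\ f w = u.
Proof.
move=> DY Dcl H.
pose ws e := proj1_sig (constructive_indefinite_description _ (H e)).
have wsP e := proj2_sig (constructive_indefinite_description _ (H e)).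
have [v Hv] := cluster ws.
have Yv : Y v.
  apply: (Y_closed HS) => l; have [e [_ Ae]] := Hv l 0.
  by exists (ws e); split=> //; apply: DY; case: (wsP e).
exists v; split.
  apply: Dcl => // l; have [e [_ Ae]] := Hv l 0.
  by exists (ws e); split; [case: (wsP e) | apply: agree_sym].
apply: functional_extensionality => i.
have [l0 Hl0] := Hf Yv i.+1.
have [e [He Ae]] := Hv l0 (maxn l0 i.+1).
case: (wsP e) => De Ae'.
have := Hl0 _ (DY _ De) Ae i (ltnSn i); move=> ->.
apply: Ae'; have := leq_maxr l0 i.+1; lia.
Qed.

End Compact.

Section Map.
Variables S T : finType.
Variable Y : pset (nat -> S).
Variable Z : pset (nat -> T).
Hypothesis HY : is_transitive_SFT Y.
Hypothesis HYne : exists x, Y x.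
Hypothesis HZ : is_transitive_SFT Z.
Hypothesis HZne : exists x, Z x.
Variable f : (nat -> S) -> (nat -> T).
Hypothesis Hf : cont_on Y f.
Hypothesis fY : forall x, Y x -> Z (f x).
Hypothesis Heq : forall x, Y x -> f (shift x) = shift (f x).

Let HYS : is_SFT Y. Proof. by case: HY. Qed.

Lemma map_iter t x : Y x -> f (iter t (@shift S) x) = iter t (@shift T) (f x).
Proof.
elim: t => //= t IH Yx; rewrite Heq ?IH //; exact: Y_iter.
Qed.

Lemma map_chain l d k c : (forall x y, Y x -> Y y -> agree l x y -> agree d (f x) (f y)) ->
  is_chain Y l k c -> is_chain Z d k (fun i => f (c i)).
Proof.
move=> Hu [Hk [Yc Ac]]; split=> //; split=> [i Hi|i Hi]; first by apply: fY; apply: Yc.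
have Yi : Y (c i) by apply: Yc; lia.
rewrite -Heq //; apply: Hu; [exact: Y_shift | apply: Yc; lia | exact: Ac].
Qed.

Lemma class_map y z : chain_rel Y y z -> chain_rel Z (f y) (f z).
Proof.
move=> H d; have [l Hl] := unif HYS Hf d.
have [m Hm] := gcd_ex HZ HZne d; have [m' Hm'] := gcd_ex HY HYne l.
have [k [c [Hc [E0 [Ek Hk]]]]] := crd_elim Hm' (H l).
exists m; split=> //; exists k, (fun i => f (c i)); split; first exact: map_chain Hc.
rewrite E0 Ek; do 2!split=> //; apply: dvdn_trans Hk.
case: Hm' => _; apply=> k' c' [Hc' Ec'].
case: Hm => Hm _; apply: (Hm _ (fun i => f (c' i))); split; first exact: map_chain Hc'.
by rewrite Ec'.
Qed.

End Map.

Lemma cont_comp (S T U : finType) (A : pset (nat -> S)) (B : pset (nat -> T))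
  (p : (nat -> S) -> (nat -> T)) (r : (nat -> T) -> (nat -> U)) :
  cont_on A p -> cont_on B r -> (forall x, A x -> B (p x)) -> cont_on A (fun x => r (p x)).
Proof.
move=> Hp Hr AB x Ax k; have [l Hl] := Hr _ (AB _ Ax) k.
have [l' Hl'] := Hp _ Ax l; exists l' => y Ay Axy.
by apply: Hl; [apply: AB | apply: Hl'].
Qed.

Lemma bound_fun (g : nat -> nat) M : exists d, forall j, j < M -> g j <= d.
Proof.
elim: M => [|M [d Hd]]; first by exists 0.
exists (maxn d (g M)) => j Hj; case: (ltngtP j M) => H.
- by apply: leq_trans (Hd _ H) (leq_maxl _ _).
- lia.
- by rewrite H leq_maxr.
Qed.

Section Key.
Variables SA SB SC : finType.
Variable A : pset (nat -> SA).
Variable B : pset (nat -> SB).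
Variable C : pset (nat -> SC).
Hypothesis HA : is_transitive_SFT A.
Hypothesis HAne : exists x, A x.
Hypothesis HB : is_transitive_SFT B.
Hypothesis HBne : exists x, B x.
Hypothesis HC : is_transitive_SFT C.
Hypothesis HCne : exists x, C x.
Variable p : (nat -> SA) -> (nat -> SB).
Variable r : (nat -> SB) -> (nat -> SC).
Hypothesis Hp : cont_on A p.
Hypothesis pA : forall x, A x -> B (p x).
Hypothesis peq : forall x, A x -> p (shift x) = shift (p x).
Hypothesis Hr : cont_on B r.
Hypothesis rB : forall x, B x -> C (r x).
Hypothesis req : forall x, B x -> r (shift x) = shift (r x).
Hypothesis HMLC : forall z, B z -> exists w, A w /\ r (p w) = r z.
Variable w0 : nat -> SA.
Hypothesis Aw0 : A w0.

Let HAS : is_SFT A. Proof. by case: HA. Qed.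
Let HBS : is_SFT B. Proof. by case: HB. Qed.

Lemma claimC M : 0 < M -> (forall d m, is_cycle_gcd A d m -> m %| M) ->
  (forall d m, is_cycle_gcd B d m -> m %| M) ->
  exists j, j < M /\ forall z, chain_rel B (p w0) z ->
    exists w, chain_rel A (iter j (@shift SA) w0) w /\ r (p w) = r z.
Proof.
move=> HM0 HMA HMB; apply: NNPP => Hn.
have Hq : cont_on A (fun w => r (p w)) by apply: cont_comp Hp Hr pA.
have H : forall j, exists zel : (nat -> SB) * nat * nat, j < M ->
   chain_rel B (p w0) zel.1.1 /\
   (forall w, chain_rel A (iter j (@shift SA) w0) w -> ~ agree zel.1.2 (r (p w)) (r zel.1.1)) /\
   (forall u, B u -> agree zel.2 zel.1.1 u -> agree zel.1.2 (r zel.1.1) (r u)).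
  move=> j; case: (ltnP j M) => Hj; last by exists (p w0, 0, 0).
  have [z [Hz [e He]]] : exists z, chain_rel B (p w0) z /\ exists e,
      forall w, chain_rel A (iter j (@shift SA) w0) w -> ~ agree e (r (p w)) (r z).
    apply: NNPP => Hz; apply: Hn; exists j; split=> // z Hzr.
    apply: (closed_img HAS Hq (D := fun w => chain_rel A (iter j (@shift SA) w0) w)).
    - by move=> w Hw; case: (cr_Y Hw).
    - move=> w Aw Hcl; apply: cr_closed => // d.
      have [w' [Hw' Aw']] := Hcl d; exists w'; split=> //; exact: Hw' d.
    - move=> e; apply: NNPP => He; apply: Hz; exists z; split=> //; exists e => w Hw Ae.
      by apply: He; exists w.
  have [_ Bz] := cr_Y Hz.
  have [l Hl] := Hr Bz e.
  by exists (z, e, l) => _ /=; split=> //; split.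
pose zel j := proj1_sig (constructive_indefinite_description _ (H j)).
have zelP j := proj2_sig (constructive_indefinite_description _ (H j)).
pose z j := (zel j).1.1.
have [d1 Hd1] := bound_fun (fun j => (zel j).2) M.
have [NB HNB] := shadow HBS.
pose d := maxn NB d1.
have Hz j : j < M -> chain_rel B (p w0) (z j) by move=> Hj; case: (zelP j Hj).
have HmB : forall m, is_cycle_gcd B d m -> m %| M by move=> m; apply: HMB.
have Pn : forall n, n < M -> exists k c, is_chain B d k c /\ M %| k /\ c k = z n /\
    forall j, j <= n -> exists t, t <= k /\ M %| t /\ c t = z j.
  elim=> [|n IH] Hn1.
    have [_ Bz0] := cr_Y (Hz 0 Hn1).
    have [k [c [Hc [E0 [Ek Hk]]]]] := chain_mult HB HBne (crd_refl HB HBne d Bz0) HM0 HmB.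
    exists k, c; split=> //; split=> //; split=> // j Hj; exists 0; split=> //; split=> //.
    by have -> : j = 0 by lia.
  have [k1 [c1 [Hc1 [Hk1 [Ek1 V1]]]]] := IH (ltnW Hn1).
  have Hr12 : chain_rel_d B d (z n) (z n.+1).
    apply: (cr_trans HB HBne (y := p w0)); last exact: Hz.
    apply: cr_sym => //; apply: Hz; lia.
  have [k2 [c2 [Hc2 [E20 [E2k Hk2]]]]] := chain_mult HB HBne Hr12 HM0 HmB.
  have Hk20 : 0 < k2 by case: Hc2.
  exists (k1 + k2), (catc c1 k1 c2); split.
    by apply: chain_cat => //; rewrite Ek1 E20.
  split; first by rewrite dvdn_add.
  split; first by rewrite catc_end.
  move=> j Hj; case: (ltngtP j n.+1) => Hjn; last first.
  - by exists (k1 + k2); rewrite Hjn catc_end // dvdn_add.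
  - lia.
  - have [t [Ht [Mt Ect]]] := V1 j (Hjn : j <= n).
    by exists t; split; [lia | split=> //; rewrite /catc Ht].
have HM1 : M.-1 < M by lia.
have [k [c [Hc [_ [_ V]]]]] := Pn M.-1 HM1.
have [x [Bx [Ax _]]] := HNB d k c (leq_maxl _ _) Hc.
have [w1 [Aw1 Ew1]] := HMLC Bx.
have [j [Hj Hw1]] := fin_classes HA HAne Aw0 Aw1 HM0 HMA.
have Hj' : j <= M.-1 by lia.
have [t [Ht [Mt Ect]]] := V j Hj'.
case: (zelP j Hj) => _ [Hne Hcont].
apply: (Hne (iter t (@shift SA) w1)).
  apply: (cr_trans HA HAne Hw1); apply: (cr_perM HA HAne) => // d' m' Hm'.
  exact: dvdn_trans (HMA _ _ Hm') Mt.
rewrite (map_iter HA peq) // (map_iter HB req) ?Ew1; last exact: pA.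
rewrite -(map_iter HB req) //; apply: agree_sym; apply: Hcont; first exact: Y_iter.
apply: agree_sym; rewrite -/(z j) -Ect.
apply: agree_le (Ax t Ht).
apply: leq_trans (Hd1 j Hj) _; rewrite /d; have := leq_maxr NB d1; lia.
Qed.

Lemma shiftC a b s :
  (forall z, chain_rel B (iter a (@shift SB) (p w0)) z ->
     exists w, chain_rel A (iter b (@shift SA) w0) w /\ r (p w) = r z) ->
  (forall z, chain_rel B (iter (s + a) (@shift SB) (p w0)) z ->
     exists w, chain_rel A (iter (s + b) (@shift SA) w0) w /\ r (p w) = r z).
Proof.
move=> H z; rewrite iterD => Hz.
have By0 : B (iter a (@shift SB) (p w0)) by apply: Y_iter => //; apply: pA.
have [u [Hu Eu]] := class_onto HB HBne By0 Hz.
have [w [Hw Ew]] := H u Hu.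
have [_ Aw] := cr_Y Hw.
exists (iter s (@shift SA) w); split; first by rewrite iterD; apply: cr_iter.
rewrite (map_iter HA peq) // (map_iter HB req) ?Ew; last exact: pA.
rewrite -(map_iter HB req) ?Eu //; by case: (cr_Y Hu).
Qed.

Lemma shiftB a b s :
  (forall z, chain_rel B (iter a (@shift SB) (p w0)) z ->
     exists v, chain_rel B (iter b (@shift SB) (p w0)) v /\ r v = r z) ->
  (forall z, chain_rel B (iter (s + a) (@shift SB) (p w0)) z ->
     exists v, chain_rel B (iter (s + b) (@shift SB) (p w0)) v /\ r v = r z).
Proof.
move=> H z; rewrite iterD => Hz.
have By0 : B (iter a (@shift SB) (p w0)) by apply: Y_iter => //; apply: pA.
have [u [Hu Eu]] := class_onto HB HBne By0 Hz.
have [v [Hv Ev]] := H u Hu.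
have [_ Bv] := cr_Y Hv.
exists (iter s (@shift SB) v); split; first by rewrite iterD; apply: cr_iter.
rewrite (map_iter HB req) // Ev -(map_iter HB req) ?Eu //; by case: (cr_Y Hu).
Qed.

Lemma key_lemma z : chain_rel B (p w0) z -> exists w, chain_rel A w0 w /\ r (p w) = r z.
Proof.
have [PA [HPA HPA']] := per_ex HA HAne.
have [PB [HPB HPB']] := per_ex HB HBne.
pose M := PA * PB.
have HM0 : 0 < M by rewrite muln_gt0 HPA HPB.
have HMA : forall d m, is_cycle_gcd A d m -> m %| M.
  by move=> d m Hm; apply: dvdn_trans (HPA' _ _ Hm) (dvdn_mulr _ _).
have HMB : forall d m, is_cycle_gcd B d m -> m %| M.
  by move=> d m Hm; apply: dvdn_trans (HPB' _ _ Hm) (dvdn_mull _ _).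
have [j [Hj R0]] := claimC HM0 HMA HMB.
have R1 : forall z, chain_rel B (iter 0 (@shift SB) (p w0)) z ->
    exists v, chain_rel B (iter j (@shift SB) (p w0)) v /\ r v = r z.
  move=> z' Hz'; have [w [Hw Ew]] := R0 z' Hz'.
  exists (p w); split=> //.
  rewrite -(map_iter HA peq) //; exact: (class_map HA HAne HB HBne Hp pA peq).
have Rt : forall t z, chain_rel B (p w0) z ->
    exists v, chain_rel B (iter (t * j) (@shift SB) (p w0)) v /\ r v = r z.
  elim=> [|t IH] z' Hz'; first by exists z'.
  have [v [Hv Ev]] := IH z' Hz'.
  have Hv' : chain_rel B (iter (t * j + 0) (@shift SB) (p w0)) v by rewrite addn0.
  have [v' [Hv'' Ev']] := shiftB R1 Hv'.
  by exists v'; split; [rewrite mulSn addnC | rewrite Ev' Ev].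
move=> Hz.
have [v [Hv Ev]] := Rt M.-1 z Hz.
have R0' : forall z, chain_rel B (iter 0 (@shift SB) (p w0)) z ->
     exists w, chain_rel A (iter j (@shift SA) w0) w /\ r (p w) = r z by [].
have Hv' : chain_rel B (iter (M.-1 * j + 0) (@shift SB) (p w0)) v by rewrite addn0.
have [w [Hw Ew]] := shiftC R0' Hv'.
exists w; split; last by rewrite Ew Ev.
apply: (cr_trans HA HAne _ Hw).
have -> : M.-1 * j + j = M * j.
  by rewrite -{2}(prednK HM0) mulSn addnC.
apply: (cr_perM HA HAne) => // d m Hm.
exact: dvdn_trans (HMA _ _ Hm) (dvdn_mulr _ _).
Qed.

End Key.

Theorem lemma5p1 (S : nat -> finType) (X : forall n, pset (nat -> S n))
  (p : forall n, (nat -> S n.+1) -> (nat -> S n)) :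
  (forall n, is_transitive_SFT (X n)) ->
  (forall n, exists x, X n x) ->
  (forall n x, X n.+1 x -> X n (p n x)) ->
  (forall n, cont_on (X n.+1) (p n)) ->
  (forall n x, X n.+1 x -> p n (shift x) = shift (p n x)) ->
  MLC1 X p ->
  exists D : forall n, pset (nat -> S n),
    (forall n, is_D_class (X n) (D n)) /\
    (forall n x, D n.+1 x -> D n (p n x)) /\
    MLC1 D p.
Proof.
move=> HX Hne HpX Hcont Heq HMLC.
have step : forall n (x : nat -> S n), exists y : nat -> S n.+1,
    img (p n) (X n.+1) x -> img (p n.+1) (X n.+2) y /\ p n y = x.
  move=> n x; case: (classic (img (p n) (X n.+1) x)) => H.
    have [y [Hy Ey]] := (HMLC n x).1 H; by exists y.
  have [y _] := Hne n.+1; by exists y.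
pose stepf n x := proj1_sig (constructive_indefinite_description _ (step n x)).
have stepP n x := proj2_sig (constructive_indefinite_description _ (step n x)).
have [v Xv] := Hne 1.
pose th := fix th (n : nat) : nat -> S n :=
  match n return nat -> S n with 0 => p 0 v | n'.+1 => stepf n' (th n') end.
have thI : forall n, img (p n) (X n.+1) (th n).
  elim=> [|n IH]; first by exists v.
  exact: (stepP n (th n) IH).1.
have thC : forall n, p n (th n.+1) = th n.
  move=> n; exact: (stepP n (th n) (thI n)).2.
have thX : forall n, X n (th n).
  by move=> n; have [y [Xy <-]] := thI n; apply: HpX.
pose D := fun n z => X n z /\ chain_rel (X n) (th n) z.
have Dcomp : forall n x, D n.+1 x -> D n (p n x).
  move=> n x [Xx Hx]; split; first exact: HpX.
  rewrite -thC; exact: (class_map (HX n.+1) (Hne n.+1) (HX n) (Hne n) (Hcont n) (@HpX n) (@Heq n)).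
exists D; split; first by move=> n; exists (th n); split.
split=> // n x; split.
  move=> [z [[Xz Hz] <-]].
  have HM : forall z, X n.+1 z -> exists w, X n.+2 w /\ p n (p n.+1 w) = p n z.
    move=> z' Xz'; have [y [[w [Xw <-]] Ey]] := (HMLC n (p n z')).1 (ex_intro _ z' (conj Xz' erefl)).
    by exists w.
  rewrite -thC in Hz.
  have [w [Hw Ew]] := key_lemma (HX n.+2) (Hne n.+2) (HX n.+1) (Hne n.+1) (Hcont n.+1) (@HpX n.+1)
    (@Heq n.+1) (Hcont n) (@Heq n) HM (thX n.+2) Hz.
  exists (p n.+1 w); split=> //; exists w; split=> //; split=> //; by case: (cr_Y Hw).
move=> [y [[w [Dw <-]] <-]]; exists (p n.+1 w); split=> //; exact: Dcomp.
Qed.
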